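(* Let $R$ be a unital ring and let $(P,Q,\psi)$ be a unital $R$-system satisfying Condition (FS'). Let $J\subseteq R$ be a $\psi$-compatible ideal such that (a) $1_R\in J$ and (b) $\psi$ is surjective. Then the relative Cuntz–Pimsner ring $\mathcal{O}_{(P,Q,\psi)}(J)$ is strongly $\mathbb{Z}$-graded.
   Context: A $\mathbb{Z}$-graded ring $B=\bigoplus_iB_i$ is strongly graded if $B_mB_n=B_{m+n}$ for all $m,n$. An $R$-system is a triple $(P,Q,\psi)$ with $P,Q$ $R$-bimodules and $\psi:P\otimes_RQ\to R$ an $R$-bimodule homomorphism; it is unital if $R$ is unital and $1_R$ acts as identity on both sides of $P$ and $Q$. Put $P^{\otimes0}=Q^{\otimes0}=R$, $Q^{\otimes n}=Q^{\otimes(n-1)}\otimes_RQ$, $P^{\otimes n}=P\otimes_RP^{\otimes(n-1)}$. A covariant representation of $(P,Q,\psi)$ is a tuple $(S,T,\sigma,B)$ with $B$ a ring, $S:P\to B$, $T:Q\to B$ additive, $\sigma:R\to B$ a ring homomorphism, with $S(pr)=S(p)\sigma(r)$, $S(rp)=\sigma(r)S(p)$, $T(qr)=T(q)\sigma(r)$, $T(rq)=\sigma(r)T(q)$, $\sigma(\psi(p\otimes q))=S(p)T(q)$. For $q\in Q,p\in P$ let $\theta_{q,p}(x)=q\psi(p\otimes x)$ on $Q$ and $\theta_{p,q}(y)=\psi(y\otimes q)p$ on $P$; $\mathcal{F}_P(Q)$ (resp. $\mathcal{F}_Q(P)$) is the additive group generated by all $\theta_{q,p}$ (resp. $\theta_{p,q}$).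 Condition (FS'): there exist $\Theta\in\mathcal{F}_P(Q)$, $\Phi\in\mathcal{F}_Q(P)$ fixing every element of $Q$, resp. $P$. Let $\Delta:R\to\mathrm{End}(Q_R)$, $\Delta(r)(q)=rq$. For a covariant representation there is a unique ring homomorphism $\pi_{T,S}:\mathcal{F}_P(Q)\to B$ with $\pi_{T,S}(\theta_{q,p})=T(q)S(p)$. The Toeplitz representation $(\iota_P,\iota_Q,\iota_R,\mathcal{T}_{(P,Q,\psi)})$ is the universal covariant representation (every covariant representation factors uniquely through it); it is $\mathbb{Z}$-graded with $\mathcal{T}_i$ the additive group generated by elements $\iota_Q^m(q)\iota_P^n(p)$ and $\iota_R(r)\iota_Q^m(q)\iota_P^n(p)$, $q\in Q^{\otimes m},p\in P^{\otimes n}$, $m-n=i$, where $\iota_Q^m(q_1\otimes\cdots\otimes q_m)=\iota_Q(q_1)\cdots\iota_Q(q_m)$, similarly $\iota_P^n$, and $\iota^0=\iota_R$. An ideal $J$ of $R$ is $\psi$-compatible if $\Delta(J)\subseteq\mathcal{F}_P(Q)$. For such $J$, $\mathcal{T}(J)$ is the ideal of $\mathcal{T}_{(P,Q,\psi)}$ generated by $\{\iota_R(x)-\pi_{\iota_Q,\iota_P}(\Delta(x)):x\in J\}$ and the relative Cuntz–Pimsner ring is $\mathcal{O}_{(P,Q,\psi)}(J)=\mathcal{T}_{(P,Q,\psi)}/\mathcal{T}(J)$ with the quotient grading $\mathcal{O}_i=\rho(\mathcal{T}_i)$, $\rho$ the quotient map. *)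

(* Defs.v *)
From HB Require Import structures.
From mathcomp Require Import all_boot all_order all_algebra.
Set Implicit Arguments. Unset Strict Implicit. Unset Printing Implicit Defensive.
Import GRing.Theory.
Local Open Scope ring_scope.

(* Rings are MathComp pzRingType (unital, possibly zero).  Homomorphisms
   between them are only required to be additive and multiplicative
   (not necessarily unit preserving), as in the paper. *)
Definition additive_map (A B : zmodType) (f : A -> B) : Prop :=
  forall x y, f (x + y) = f x + f y.

Definition ring_hom (A B : pzRingType) (f : A -> B) : Prop :=
  additive_map f /\ (forall x y, f (x * y) = f x * f y).

Definition sgn (V : zmodType) (b : bool) (v : V) : V := if b then - v else v.

Definition zspan (V : zmodType) (G : V -> Prop) (v : V) : Prop :=
  exists s : seq (bool * V),
    (forall t, t \in s -> G t.2) /\ v = \sum_(t <- s) sgn t.1 t.2.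

Definition is_ideal (R : pzRingType) (J : R -> Prop) : Prop :=
  J 0 /\ (forall x y, J x -> J y -> J (x - y)) /\
  (forall r x, J x -> J (r * x)) /\ (forall r x, J x -> J (x * r)).

Definition ideal_gen (T : pzRingType) (G : T -> Prop) (y : T) : Prop :=
  exists l : seq (T * T * T),
    (forall t, t \in l -> G t.1.2) /\ y = \sum_(t <- l) t.1.1 * t.1.2 * t.2.

(* Data of an R-system (P, Q, psi): bimodule actions and psi, where the
   bimodule map psi : P (x)_R Q -> R is given by its values psi p q on
   simple tensors (a balanced biadditive map). *)
Record Rsystem (R : pzRingType) (P Q : zmodType) := RSystem {
  lP : R -> P -> P; rP : P -> R -> P;
  lQ : R -> Q -> Q; rQ : Q -> R -> Q;
  psi : P -> Q -> R }.

Definition is_bimodule (R : pzRingType) (M : zmodType)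
  (la : R -> M -> M) (ra : M -> R -> M) : Prop :=
  (forall r x y, la r (x + y) = la r x + la r y) /\
  (forall r s x, la (r + s) x = la r x + la s x) /\
  (forall r s x, la (r * s) x = la r (la s x)) /\
  (forall r x y, ra (x + y) r = ra x r + ra y r) /\
  (forall r s x, ra x (r + s) = ra x r + ra x s) /\
  (forall r s x, ra x (r * s) = ra (ra x r) s) /\
  (forall r s x, la r (ra x s) = ra (la r x) s).

Definition is_Rsystem (R : pzRingType) (P Q : zmodType) (X : Rsystem R P Q) : Prop :=
  is_bimodule (lP X) (rP X) /\ is_bimodule (lQ X) (rQ X) /\
  (forall p p' q, psi X (p + p') q = psi X p q + psi X p' q) /\
  (forall p q q', psi X p (q + q') = psi X p q + psi X p q') /\
  (forall p r q, psi X (rP X p r) q = psi X p (lQ X r q)) /\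
  (forall r p q, psi X (lP X r p) q = r * psi X p q) /\
  (forall p q r, psi X p (rQ X q r) = psi X p q * r).

Definition unital_Rsystem (R : pzRingType) (P Q : zmodType) (X : Rsystem R P Q) : Prop :=
  (forall p, lP X 1 p = p) /\ (forall p, rP X p 1 = p) /\
  (forall q, lQ X 1 q = q) /\ (forall q, rQ X q 1 = q).

(* An element of F_P(Q), written as sum_k (+/-) theta_{q_k,p_k},
   evaluated at x: theta_{q,p}(x) = q psi(p (x) x). *)
Definition thetaQ (R : pzRingType) (P Q : zmodType) (X : Rsystem R P Q)
  (s : seq (bool * Q * P)) (x : Q) : Q :=
  \sum_(t <- s) sgn t.1.1 (rQ X t.1.2 (psi X t.2 x)).

(* An element of F_Q(P): sum_k (+/-) theta_{p_k,q_k},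
   theta_{p,q}(y) = psi(y (x) q) p. *)
Definition thetaP (R : pzRingType) (P Q : zmodType) (X : Rsystem R P Q)
  (s : seq (bool * P * Q)) (y : P) : P :=
  \sum_(t <- s) sgn t.1.1 (lP X (psi X y t.2) t.1.2).

Definition condFS' (R : pzRingType) (P Q : zmodType) (X : Rsystem R P Q) : Prop :=
  (exists s, forall x, thetaQ X s x = x) /\ (exists s, forall y, thetaP X s y = y).

(* psi surjective: every r is psi of some element of P (x)_R Q, i.e. a
   finite sum of values on simple tensors. *)
Definition psi_surjective (R : pzRingType) (P Q : zmodType) (X : Rsystem R P Q) : Prop :=
  forall r : R, exists s : seq (P * Q), r = \sum_(t <- s) psi X t.1 t.2.

(* psi-compatible ideal: Delta(J) \subseteq F_P(Q). *)
Definition psi_compatible (R : pzRingType) (P Q : zmodType) (X : Rsystem R P Q)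
  (J : R -> Prop) : Prop :=
  is_ideal J /\ forall x, J x -> exists s, forall q, lQ X x q = thetaQ X s q.

Definition covariant (R : pzRingType) (P Q : zmodType) (X : Rsystem R P Q)
  (B : pzRingType) (S : P -> B) (T : Q -> B) (sigma : R -> B) : Prop :=
  additive_map S /\ additive_map T /\ ring_hom sigma /\
  (forall p r, S (rP X p r) = S p * sigma r) /\
  (forall r p, S (lP X r p) = sigma r * S p) /\
  (forall q r, T (rQ X q r) = T q * sigma r) /\
  (forall r q, T (lQ X r q) = sigma r * T q) /\
  (forall p q, sigma (psi X p q) = S p * T q).

Definition toeplitz_universal (R : pzRingType) (P Q : zmodType) (X : Rsystem R P Q)
  (TT : pzRingType) (iP : P -> TT) (iQ : Q -> TT) (iR : R -> TT) : Prop :=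
  covariant X iP iQ iR /\
  forall (B : pzRingType) (S : P -> B) (T : Q -> B) (sigma : R -> B),
    covariant X S T sigma ->
    (exists phi : TT -> B, ring_hom phi /\ (forall p, phi (iP p) = S p) /\
        (forall q, phi (iQ q) = T q) /\ (forall r, phi (iR r) = sigma r)) /\
    (forall phi1 phi2 : TT -> B, ring_hom phi1 -> ring_hom phi2 ->
        (forall p, phi1 (iP p) = S p) -> (forall q, phi1 (iQ q) = T q) ->
        (forall r, phi1 (iR r) = sigma r) ->
        (forall p, phi2 (iP p) = S p) -> (forall q, phi2 (iQ q) = T q) ->
        (forall r, phi2 (iR r) = sigma r) ->
        forall x, phi1 x = phi2 x).

(* iota_Q^m on a simple tensor q_1 (x) ... (x) q_m; for m = 0 the
   "tensor" is an element r of R and iota^0 = iota_R. *)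
Definition iQm (R : pzRingType) (Q : zmodType) (TT : pzRingType)
  (iR : R -> TT) (iQ : Q -> TT) (r : R) (qs : seq Q) : TT :=
  if qs is [::] then iR r else \prod_(q <- qs) iQ q.

Definition iPm (R : pzRingType) (P : zmodType) (TT : pzRingType)
  (iR : R -> TT) (iP : P -> TT) (r : R) (ps : seq P) : TT :=
  if ps is [::] then iR r else \prod_(p <- ps) iP p.

Definition Tgen (R : pzRingType) (P Q : zmodType) (TT : pzRingType)
  (iP : P -> TT) (iQ : Q -> TT) (iR : R -> TT) (i : int) (x : TT) : Prop :=
  exists (qs : seq Q) (ps : seq P) (r0 r1 r2 : R),
    (size qs)%:Z - (size ps)%:Z = i /\
    (x = iQm iR iQ r1 qs * iPm iR iP r2 ps \/
     x = iR r0 * (iQm iR iQ r1 qs * iPm iR iP r2 ps)).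

Definition Tgr (R : pzRingType) (P Q : zmodType) (TT : pzRingType)
  (iP : P -> TT) (iQ : Q -> TT) (iR : R -> TT) (i : int) : TT -> Prop :=
  zspan (Tgen iP iQ iR i).

(* Generators of T(J): iota_R(x) - pi(Delta(x)), x in J, where
   Delta(x) = sum (+/-) theta_{q_k,p_k} and pi maps it to
   sum (+/-) iota_Q(q_k) iota_P(p_k) (well defined by the paper). *)
Definition TJgen (R : pzRingType) (P Q : zmodType) (X : Rsystem R P Q)
  (J : R -> Prop) (TT : pzRingType) (iP : P -> TT) (iQ : Q -> TT) (iR : R -> TT)
  (y : TT) : Prop :=
  exists (x : R) (s : seq (bool * Q * P)),
    J x /\ (forall q, lQ X x q = thetaQ X s q) /\
    y = iR x - \sum_(t <- s) sgn t.1.1 (iQ t.1.2 * iP t.2).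

Definition strongly_graded (B : pzRingType) (G : int -> B -> Prop) : Prop :=
  forall (m n : int) (y : B),
    G (m + n) y <-> zspan (fun z => exists a b, G m a /\ G n b /\ z = a * b) y.

(* Main.v *)
Require Import Defs.
From HB Require Import structures.
From mathcomp Require Import all_boot all_order all_algebra zify.
Import GRing.Theory.
Local Open Scope ring_scope.

Lemma zspan0 (V : zmodType) (G : V -> Prop) : zspan G 0.
Proof. by exists [::]; rewrite big_nil. Qed.

Lemma zspan_gen (V : zmodType) (G : V -> Prop) v : G v -> zspan G v.
Proof. by move=> Gv; exists [:: (false, v)]; split=> [t|]; rewrite ?big_seq1 // inE => /eqP->. Qed.

Lemma zspanD (V : zmodType) (G : V -> Prop) u v : zspan G u -> zspan G v -> zspan G (u + v).
Proof.
move=> [s [Hs ->]] [s' [Hs' ->]]; exists (s ++ s'); split; last by rewrite big_cat.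
by move=> t; rewrite mem_cat => /orP[/Hs|/Hs'].
Qed.

Lemma zspanN (V : zmodType) (G : V -> Prop) v : zspan G v -> zspan G (- v).
Proof.
move=> [s [Hs ->]]; exists [seq (~~ t.1, t.2) | t <- s]; split.
  by move=> t /mapP[u /Hs ? ->].
rewrite big_map -sumrN; apply: eq_bigr => [[[] w]] _ //=; by rewrite opprK.
Qed.

Lemma zspan_sgn (V : zmodType) (G : V -> Prop) b v : zspan G v -> zspan G (sgn b v).
Proof. by case: b => //= /zspanN. Qed.

Lemma zspan_sum (V : zmodType) (G : V -> Prop) (s : seq (bool * V)) :
  (forall t, t \in s -> zspan G t.2) -> zspan G (\sum_(t <- s) sgn t.1 t.2).
Proof.
elim: s => [|t s IH] H; first by rewrite big_nil; apply: zspan0.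
rewrite big_cons; apply: zspanD; first by apply: zspan_sgn; apply: H; rewrite inE eqxx.
by apply: IH => u us; apply: H; rewrite inE us orbT.
Qed.

Lemma zspan_map (V W : zmodType) (G : V -> Prop) (H : W -> Prop) (f : V -> W) v :
  (forall x y, f (x + y) = f x + f y) ->
  (forall g, G g -> zspan H (f g)) -> zspan G v -> zspan H (f v).
Proof.
move=> fD fG [s [Hs ->]].
have f0 : f 0 = 0 by apply: (addrI (f 0)); rewrite -fD !addr0.
have fN : forall x, f (- x) = - f x.
  by move=> x; apply: (addrI (f x)); rewrite -fD !subrr f0.
elim: s Hs => [|t s IH] Hs; first by rewrite big_nil f0; apply: zspan0.
rewrite big_cons fD; apply: zspanD; last by apply: IH => u us; apply: Hs; rewrite inE us orbT.
have := fG _ (Hs t (mem_head _ _)); case: t.1 => //= ?; rewrite fN; exact: zspanN.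
Qed.

Set Implicit Arguments. Unset Strict Implicit.
Record facts (R : pzRingType) (P Q : zmodType) (X : Rsystem R P Q)
  (TT : pzRingType) (iP : P -> TT) (iQ : Q -> TT) (iR : R -> TT) : Prop := Facts {
  iRD : forall x y, iR (x + y) = iR x + iR y;
  iRM : forall x y, iR (x * y) = iR x * iR y;
  iPr : forall p r, iP (rP X p r) = iP p * iR r;
  iPl : forall r p, iP (lP X r p) = iR r * iP p;
  iQr : forall q r, iQ (rQ X q r) = iQ q * iR r;
  iQl : forall r q, iQ (lQ X r q) = iR r * iQ q;
  ipsi : forall p q, iR (psi X p q) = iP p * iQ q;
  lP1 : forall p, lP X 1 p = p;
  rP1 : forall p, rP X p 1 = p;
  lQ1 : forall q, lQ X 1 q = q;
  rQ1 : forall q, rQ X q 1 = q }.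













Lemma facts_of (R : pzRingType) (P Q : zmodType) (X : Rsystem R P Q)
  (TT : pzRingType) (iP : P -> TT) (iQ : Q -> TT) (iR : R -> TT) :
  unital_Rsystem X -> covariant X iP iQ iR -> facts X iP iQ iR.
Proof.
move=> [u1 [u2 [u3 u4]]] [_ [_ [[h1 h2] [h3 [h4 [h5 [h6 h7]]]]]]].
by constructor.
Qed.

Lemma iR0 (R : pzRingType) (P Q : zmodType) (X : Rsystem R P Q)
  (TT : pzRingType) (iP : P -> TT) (iQ : Q -> TT) (iR : R -> TT) :
  facts X iP iQ iR -> iR 0 = 0.
Proof. by move=> F; apply: (addrI (iR 0)); rewrite -(iRD F) !addr0. Qed.

Lemma tgr_R (R : pzRingType) (P Q : zmodType) (X : Rsystem R P Q)
  (TT : pzRingType) (iP : P -> TT) (iQ : Q -> TT) (iR : R -> TT) r i y :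
  facts X iP iQ iR -> Tgr iP iQ iR i y -> Tgr iP iQ iR i (iR r * y).
Proof.
move=> F; apply: (@zspan_map _ _ _ _ (fun z => _ * z)); first by move=> ? ?; rewrite mulrDr.
move=> g [qs [ps [r0 [r1 [r2 [Hi [->| ->]]]]]]]; apply: zspan_gen.
  by exists qs, ps, r, r1, r2; split=> //; right.
by exists qs, ps, (r * r0), r1, r2; split=> //; right; rewrite mulrA (iRM F).
Qed.

Lemma tgen_Q1 (R : pzRingType) (P Q : zmodType) (X : Rsystem R P Q)
  (TT : pzRingType) (iP : P -> TT) (iQ : Q -> TT) (iR : R -> TT) q qs ps r1 r2 :
  facts X iP iQ iR ->
  Tgen iP iQ iR ((size qs)%:Z - (size ps)%:Z + 1)
    (iQ q * (iQm iR iQ r1 qs * iPm iR iP r2 ps)).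
Proof.
move=> F; rewrite mulrA.
case: qs => [|q' qs] /=.
  exists [:: rQ X q r1], ps, 0, 1, r2; split; first by rewrite /=; lia.
  by left; rewrite /= big_seq1 (iQr F).
exists [:: q, q' & qs], ps, 0, 1, r2; split; first by rewrite /=; lia.
by left; rewrite /iQm [in RHS]big_cons.
Qed.

Lemma tgr_Q (R : pzRingType) (P Q : zmodType) (X : Rsystem R P Q)
  (TT : pzRingType) (iP : P -> TT) (iQ : Q -> TT) (iR : R -> TT) q i y :
  facts X iP iQ iR -> Tgr iP iQ iR i y -> Tgr iP iQ iR (i + 1) (iQ q * y).
Proof.
move=> F; apply: (@zspan_map _ _ _ _ (fun z => iQ q * z)); first by move=> ? ?; rewrite mulrDr.
move=> g [qs [ps [r0 [r1 [r2 [<- [->| ->]]]]]]]; apply: zspan_gen.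
  exact: tgen_Q1 F.
rewrite mulrA -(iQr F). apply: tgen_Q1 F.
Qed.

Lemma iR1P (R : pzRingType) (P Q : zmodType) (X : Rsystem R P Q)
  (TT : pzRingType) (iP : P -> TT) (iQ : Q -> TT) (iR : R -> TT) p ps :
  facts X iP iQ iR -> iR 1 * \prod_(p0 <- p :: ps) iP p0 = \prod_(p0 <- p :: ps) iP p0.
Proof. by move=> F; rewrite !big_cons mulrA -(iPl F) (lP1 F). Qed.

Lemma tgen_P1 (R : pzRingType) (P Q : zmodType) (X : Rsystem R P Q)
  (TT : pzRingType) (iP : P -> TT) (iQ : Q -> TT) (iR : R -> TT) p qs ps r1 r2 :
  facts X iP iQ iR ->
  Tgen iP iQ iR ((size qs)%:Z - (size ps)%:Z - 1)
    (iP p * (iQm iR iQ r1 qs * iPm iR iP r2 ps)).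
Proof.
move=> F; case: qs => [|q qs] /=.
  rewrite mulrA -(iPr F).
  case: ps => [|p' ps] /=.
    exists [::], [:: rP X (rP X p r1) r2], 0, 1, 1; split; first by rewrite /=; lia.
    by left; rewrite /= big_seq1 -(iPl F) (lP1 F) [in RHS](iPr F).
  exists [::], [:: rP X p r1, p' & ps], 0, 1, 1; split; first by rewrite /=; lia.
  by left; rewrite /= (iR1P _ _ F) [in RHS]big_cons.
rewrite big_cons -mulrA mulrA -(ipsi F).
case: qs => [|q' qs] /=.
  exists [::], ps, (psi X p q), 1, r2; split; first by rewrite /=; lia.
  by right; rewrite big_nil mul1r mulrA -(iRM F) mulr1.
exists [:: q' & qs], ps, (psi X p q), 1, r2; split; first by rewrite /=; lia.
by right; rewrite /= mulrA.
Qed.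

Lemma tgr_P (R : pzRingType) (P Q : zmodType) (X : Rsystem R P Q)
  (TT : pzRingType) (iP : P -> TT) (iQ : Q -> TT) (iR : R -> TT) p i y :
  facts X iP iQ iR -> Tgr iP iQ iR i y -> Tgr iP iQ iR (i - 1) (iP p * y).
Proof.
move=> F; apply: (@zspan_map _ _ _ _ (fun z => _ * z)); first by move=> ? ?; rewrite mulrDr.
move=> g [qs [ps [r0 [r1 [r2 [<- [->| ->]]]]]]]; apply: zspan_gen.
  exact: tgen_P1 F.
by rewrite mulrA -(iPr F); apply: tgen_P1 F.
Qed.

Lemma tgr_Ps (R : pzRingType) (P Q : zmodType) (X : Rsystem R P Q)
  (TT : pzRingType) (iP : P -> TT) (iQ : Q -> TT) (iR : R -> TT) ps r i y :
  facts X iP iQ iR -> Tgr iP iQ iR i y ->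
  Tgr iP iQ iR (i - (size ps)%:Z) (iPm iR iP r ps * y).
Proof.
move=> F Hy; case: ps => [|p ps] /=; first by rewrite subr0; apply: tgr_R F Hy.
elim: ps p => [|p' ps IH] p /=.
  by rewrite big_seq1; apply: tgr_P F Hy.
rewrite big_cons -mulrA.
have -> : i - (size ps).+2%:Z = i - (size ps).+1%:Z - 1 by lia.
exact: tgr_P F (IH p').
Qed.

Lemma tgr_Qs (R : pzRingType) (P Q : zmodType) (X : Rsystem R P Q)
  (TT : pzRingType) (iP : P -> TT) (iQ : Q -> TT) (iR : R -> TT) qs r i y :
  facts X iP iQ iR -> Tgr iP iQ iR i y ->
  Tgr iP iQ iR (i + (size qs)%:Z) (iQm iR iQ r qs * y).
Proof.
move=> F Hy; case: qs => [|q qs] /=; first by rewrite addr0; apply: tgr_R F Hy.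
elim: qs q => [|q' qs IH] q /=.
  by rewrite big_seq1; apply: tgr_Q F Hy.
rewrite big_cons -mulrA.
have -> : i + (size qs).+2%:Z = i + (size qs).+1%:Z + 1 by lia.
exact: tgr_Q F (IH q').
Qed.

Lemma tgr_mul (R : pzRingType) (P Q : zmodType) (X : Rsystem R P Q)
  (TT : pzRingType) (iP : P -> TT) (iQ : Q -> TT) (iR : R -> TT) m n x y :
  facts X iP iQ iR -> Tgr iP iQ iR m x -> Tgr iP iQ iR n y ->
  Tgr iP iQ iR (m + n) (x * y).
Proof.
move=> F Hx Hy; move: Hx; apply: (@zspan_map _ _ _ _ (fun z => z * y)).
  by move=> ? ?; rewrite mulrDl.
move=> g [qs [ps [r0 [r1 [r2 [<- Hg]]]]]].
have H1 : Tgr iP iQ iR ((size qs)%:Z - (size ps)%:Z + n)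
            ((iQm iR iQ r1 qs * iPm iR iP r2 ps) * y).
  rewrite -mulrA.
  have -> : (size qs)%:Z - (size ps)%:Z + n = n - (size ps)%:Z + (size qs)%:Z by lia.
  exact: (tgr_Qs qs r1 F (tgr_Ps ps r2 F Hy)).
by case: Hg => ->; [exact: H1 | rewrite -mulrA; apply: tgr_R F H1].
Qed.

Lemma tgr_unit (R : pzRingType) (P Q : zmodType) (X : Rsystem R P Q)
  (TT : pzRingType) (iP : P -> TT) (iQ : Q -> TT) (iR : R -> TT) i x :
  facts X iP iQ iR -> Tgr iP iQ iR i x -> iR 1 * x = x.
Proof.
move=> F [s [Hs ->]]; rewrite mulr_sumr; apply: eq_big_seq => t /Hs.
have E : forall r, iR 1 * iR r = iR r by move=> r; rewrite -(iRM F) mul1r.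
have H1 : forall qs r1 ps r2, iR 1 * (iQm iR iQ r1 qs * iPm iR iP r2 ps) = iQm iR iQ r1 qs * iPm iR iP r2 ps.
  move=> qs r1 ps r2; rewrite mulrA; congr (_ * _); case: qs => [|q qs] /=; first exact: E.
  by rewrite !big_cons mulrA -(iQl F) (lQ1 F).
case: t => b g /=.
move=> [qs [ps [r0 [r1 [r2 [_ Hg]]]]]].
have Hg1 : iR 1 * g = g.
  by case: Hg => ->; rewrite ?mulrA ?E -?mulrA ?H1.
by case: b => /=; rewrite ?mulrN Hg1.
Qed.

Lemma zspan_closed (V : zmodType) (G H : V -> Prop) v :
  H 0 -> (forall u w, H u -> H w -> H (u + w)) -> (forall u, H u -> H (- u)) ->
  (forall g, G g -> H g) -> zspan G v -> H v.
Proof.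
move=> H0 HD HN HG [s [Hs ->]]; elim: s Hs => [|t s IH] Hs; first by rewrite big_nil.
rewrite big_cons; apply: HD; last by apply: IH => u us; apply: Hs; rewrite inE us orbT.
have := HG _ (Hs t (mem_head _ _)); case: t.1 => //=; exact: HN.
Qed.

Lemma zspan_sumf (V : zmodType) (I : Type) (G : V -> Prop) (s : seq I) (b : I -> bool) (F : I -> V) :
  (forall t, zspan G (F t)) -> zspan G (\sum_(t <- s) sgn (b t) (F t)).
Proof.
move=> H; elim: s => [|t s IH]; first by rewrite big_nil; apply: zspan0.
by rewrite big_cons; apply: zspanD => //; apply: zspan_sgn.
Qed.

Lemma addmap0 (A B : zmodType) (f : A -> B) : additive_map f -> f 0 = 0.
Proof. by move=> fD; apply: (addrI (f 0)); rewrite -fD !addr0. Qed.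

Lemma addmapN (A B : zmodType) (f : A -> B) x : additive_map f -> f (- x) = - f x.
Proof. by move=> fD; apply: (addrI (f x)); rewrite -fD !subrr addmap0. Qed.

Lemma addmap_sgn (A B : zmodType) (f : A -> B) b x : additive_map f -> f (sgn b x) = sgn b (f x).
Proof. by case: b => //= fD; apply: addmapN. Qed.

Lemma addmap_sum (A B : zmodType) (I : Type) (f : A -> B) (s : seq I) (F : I -> A) :
  additive_map f -> f (\sum_(t <- s) F t) = \sum_(t <- s) f (F t).
Proof.
move=> fD; elim: s => [|t s IH]; first by rewrite !big_nil addmap0.
by rewrite !big_cons fD IH.
Qed.

Unset Implicit Arguments.

Theorem mainTheorem5 (R : pzRingType) (P Q : zmodType) (X : Rsystem R P Q)
  (TT : pzRingType) (iP : P -> TT) (iQ : Q -> TT) (iR : R -> TT)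
  (J : R -> Prop) (O : pzRingType) (rho : TT -> O) :
  is_Rsystem X -> unital_Rsystem X -> condFS' X ->
  toeplitz_universal X iP iQ iR ->
  psi_compatible X J -> J 1 -> psi_surjective X ->
  ring_hom rho -> (forall y : O, exists x, rho x = y) ->
  (forall x, rho x = 0 <-> ideal_gen (TJgen X J iP iQ iR) x) ->
  strongly_graded (fun i (y : O) => exists x, Tgr iP iQ iR i x /\ y = rho x).
Proof.
move=> _ HU _ [Hcov _] [_ HJ] J1 Hsurj [rD rM] _ Hker.
have F := facts_of HU Hcov.
set G := fun i (y : O) => exists x, Tgr iP iQ iR i x /\ y = rho x.
have Gmul : forall m n a b, G m a -> G n b -> G (m + n) (a * b).
  move=> m n a b [x [Hx ->]] [x' [Hx' ->]]; exists (x * x'); split.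
    exact: tgr_mul F Hx Hx'.
  by rewrite rM.
have Geq : forall i j y, i = j -> G i y -> G j y by move=> i j y ->.
set e := rho (iR 1).
have E1 : forall r, iR 1 * iR r = iR r by move=> r; rewrite -(iRM F) mul1r.
have Ge : G 0 e.
  exists (iR 1); split => //; apply: zspan_gen.
  by exists [::], [::], 0, 1, 1; split => //; left; rewrite /= E1.
have GQ : forall q, G 1 (rho (iQ q)).
  move=> q; exists (iQ q); split => //; apply: zspan_gen.
  exists [:: q], [::], 0, 1, 1; split => //; left.
  by rewrite /= big_seq1 -(iQr F) (rQ1 F).
have GP : forall p, G (-1) (rho (iP p)).
  move=> p; exists (iP p); split => //; apply: zspan_gen.
  exists [::], [:: p], 0, 1, 1; split => //; left.
  by rewrite /= big_seq1 -(iPl F) (lP1 F).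
have eQ : forall q, rho (iQ q) * e = rho (iQ q).
  by move=> q; rewrite -rM -(iQr F) (rQ1 F).
have Qe : forall q, e * rho (iQ q) = rho (iQ q).
  by move=> q; rewrite -rM -(iQl F) (lQ1 F).
have eP : forall p, rho (iP p) * e = rho (iP p).
  by move=> p; rewrite -rM -(iPr F) (rP1 F).
have Pe : forall p, e * rho (iP p) = rho (iP p).
  by move=> p; rewrite -rM -(iPl F) (lP1 F).
have [s Hs] := HJ 1 J1.
have eS : e = \sum_(t <- s) sgn t.1.1 (rho (iQ t.1.2) * rho (iP t.2)).
  set S := \sum_(t <- s) sgn t.1.1 (iQ t.1.2 * iP t.2).
  have : rho (iR 1 - S) = 0.
    apply/Hker; exists [:: (1, iR 1 - S, 1)]; split.
      move=> t; rewrite inE => /eqP -> /=; exists 1, s; split => //.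
    by rewrite big_seq1 /= mul1r mulr1.
  rewrite rD addmapN // => /eqP; rewrite subr_eq0 => /eqP He; rewrite /e He.
  rewrite /S addmap_sum //; apply: eq_bigr => t _; by rewrite addmap_sgn // rM.
have [s' Hs'] := Hsurj 1.
have eS' : e = \sum_(t <- s') sgn false (rho (iP t.1) * rho (iQ t.2)).
  by rewrite /e Hs' (addmap_sum _ _ (iRD F)) (addmap_sum _ _ rD); apply: eq_bigr => t _; rewrite (ipsi F) rM.
set Z := fun m (z : O) => exists a b, G m a /\ G (- m) b /\ z = a * b.
have Ep : forall k : nat, zspan (Z k%:Z) e.
  elim=> [|k IH].
    apply: zspan_gen; exists e, e; split => //; split => //.
    by rewrite /e -rM E1.
  rewrite eS; apply: zspan_sumf => t.
  rewrite -{1}(eQ t.1.2) -mulrA.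
  apply: (@zspan_map _ _ _ _ (fun z => rho (iQ t.1.2) * (z * rho (iP t.2)))) IH.
    by move=> ? ?; rewrite mulrDl mulrDr.
  move=> g [a [b [Ga [Gb ->]]]]; apply: zspan_gen.
  exists (rho (iQ t.1.2) * a), (b * rho (iP t.2)); split; last split.
  - by apply: Geq (Gmul _ _ _ _ (GQ _) Ga); lia.
  - by apply: Geq (Gmul _ _ _ _ Gb (GP _)); lia.
  - by rewrite !mulrA.
have En : forall k : nat, zspan (Z (- k%:Z)) e.
  elim=> [|k IH].
    apply: zspan_gen; exists e, e; split => //; split => //.
    by rewrite /e -rM E1.
  rewrite eS'; apply: zspan_sumf => t.
  rewrite -{1}(eP t.1) -mulrA.
  apply: (@zspan_map _ _ _ _ (fun z => rho (iP t.1) * (z * rho (iQ t.2)))) IH.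
    by move=> ? ?; rewrite mulrDl mulrDr.
  move=> g [a [b [Ga [Gb ->]]]]; apply: zspan_gen.
  exists (rho (iP t.1) * a), (b * rho (iQ t.2)); split; last split.
  - by apply: Geq (Gmul _ _ _ _ (GP _) Ga); lia.
  - by apply: Geq (Gmul _ _ _ _ Gb (GQ _)); lia.
  - by rewrite !mulrA.
have Em : forall m : int, zspan (Z m) e.
  case=> k; first exact: Ep.
  by rewrite NegzE; apply: En.
move=> m n y; split.
  move=> [x [Hx ->]].
  have -> : rho x = e * rho x by rewrite /e -rM (tgr_unit F Hx).
  apply: (@zspan_map _ _ _ _ (fun z => z * rho x)) (Em m).
    by move=> ? ?; rewrite mulrDl.
  move=> g [a [b [Ga [Gb ->]]]]; apply: zspan_gen.
  exists a, (b * rho x); split => //; split; last by rewrite mulrA.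
  apply: Geq (Gmul _ _ _ _ Gb (ex_intro _ x (conj Hx erefl))); lia.
apply: zspan_closed.
- by exists 0; split; [exact: zspan0 | rewrite addmap0].
- move=> u w [x [Hx ->]] [x' [Hx' ->]]; exists (x + x'); split; last by rewrite rD.
  exact: zspanD.
- move=> u [x [Hx ->]]; exists (- x); split; last by rewrite addmapN.
  exact: zspanN.
- by move=> g [a [b [Ga [Gb ->]]]]; apply: Gmul.
Qed.
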